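(* Let $\circ$ be one of the binary operations $\cup,\cap,-$ on languages, and for sets of languages $\mathcal{R}_1,\mathcal{R}_2$ over $\Sigma$ define the Cartesian operation $\mathcal{R}_1\otimes\mathcal{R}_2=\{L_1\circ L_2\mid L_1\in\mathcal{R}_1,\ L_2\in\mathcal{R}_2\}$. (1) In general $\mathcal{R}_1\otimes\mathcal{R}_2$ is not a rational set of regular languages: there exist rational sets of regular languages $\mathcal{R}_1,\mathcal{R}_2$ for which it is not. (2) If $\mathcal{R}_1$ and $\mathcal{R}_2$ are finite rational sets of regular languages, then $\mathcal{R}_1\otimes\mathcal{R}_2$ is a rational set of regular languages. (3) In the latter case a new language substitution is in general required: there exist an alphabet $\Delta$, a regular language substitution $\varphi:\Delta\to2^{\Sigma^*}$ and regular $K_1,K_2\subseteq\Delta^+$ with $\mathcal{R}_i=(K_i,\varphi)$ finite such that there is no regular $K'\subseteq\Delta^+$ with $\mathcal{R}_1\otimes\mathcal{R}_2=(K',\varphi)$.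
   Context: Alphabets are nonempty finite sets. A regular language substitution $\varphi:\Delta\to2^{\Sigma^*}$ maps each symbol to a regular language over $\Sigma$, extended by $\varphi(\delta w)=\varphi(\delta)\varphi(w)$. A set $\mathcal{R}$ of regular languages over $\Sigma$ is a rational set of regular languages, written $\mathcal{R}=(K,\varphi)$, if there are an alphabet $\Delta$, a regular $K\subseteq\Delta^+$ and a regular language substitution $\varphi$ with $\mathcal{R}=\{\varphi(w)\mid w\in K\}$. *)

(* Defs.v *)
From Stdlib Require Import List.
From mathcomp Require Import all_boot.
Set Implicit Arguments. Unset Strict Implicit. Unset Printing Implicit Defensive.

Definition lang (A : finType) := seq A -> Prop.

Definition regular (A : finType) (L : lang A) : Prop :=
  exists (Q : finType) (q0 : Q) (F : pred Q) (d : Q -> A -> Q),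
    forall w, L w <-> F (foldl d q0 w).

Definition conc (A : finType) (L1 L2 : lang A) : lang A :=
  fun x => exists u v, x = u ++ v /\ L1 u /\ L2 v.

Definition eps_lang (A : finType) : lang A := fun x => x = [::].

Definition subst (D S : finType) (phi : D -> lang S) (w : seq D) : lang S :=
  foldr (fun d L => conc (phi d) L) (@eps_lang S) w.

Definition regular_subst (D S : finType) (phi : D -> lang S) : Prop :=
  forall d, regular (phi d).

Definition nonempty_words (D : finType) (K : lang D) : Prop :=
  forall w, K w -> w <> [::].

Definition rset (D S : finType) (K : lang D) (phi : D -> lang S) : lang S -> Prop :=
  fun L => exists w, K w /\ L = subst phi w.

Definition same_set (S : finType) (R1 R2 : lang S -> Prop) : Prop :=
  forall L, R1 L <-> R2 L.

Definition rational_set (S : finType) (R : lang S -> Prop) : Prop :=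
  exists (D : finType) (K : lang D) (phi : D -> lang S),
    0 < #|D| /\ regular K /\ nonempty_words K /\ regular_subst phi /\
    same_set R (rset K phi).

Definition finite_set (S : finType) (R : lang S -> Prop) : Prop :=
  exists s : seq (lang S), forall L, R L <-> Stdlib.Lists.List.In L s.

Inductive lang_op := OpUnion | OpInter | OpDiff.

Definition apply_op (S : finType) (o : lang_op) (L1 L2 : lang S) : lang S :=
  match o with
  | OpUnion => fun x => L1 x \/ L2 x
  | OpInter => fun x => L1 x /\ L2 x
  | OpDiff => fun x => L1 x /\ ~ L2 x
  end.

Definition cart (S : finType) (o : lang_op) (R1 R2 : lang S -> Prop) : lang S -> Prop :=
  fun L => exists L1 L2, R1 L1 /\ R2 L2 /\ L = apply_op o L1 L2.

(* Main.v *)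
Require Import Defs.
From mathcomp Require Import all_boot.
From Stdlib Require List.
Set Implicit Arguments. Unset Strict Implicit.
From Stdlib Require Import FunctionalExtensionality PropExtensionality IndefiniteDescription.

Lemma lang_ext (S : finType) (A B : lang S) : (forall z, A z <-> B z) -> A = B.
Proof.
move=> H; apply: functional_extensionality => z; apply: propositional_extensionality; exact: H.
Qed.

Lemma conc_eps (S : finType) (A : lang S) z : conc A (@eps_lang S) z <-> A z.
Proof.
split.
  by case=> u [v [-> [Au Hv]]]; rewrite /eps_lang in Hv; rewrite Hv cats0.
by move=> Az; exists z, [::]; rewrite cats0.
Qed.

Lemma subst1 (D S : finType) (phi : D -> lang S) d : subst phi [:: d] = phi d.
Proof. apply: lang_ext => z; exact: conc_eps. Qed.

Definition sing (A : finType) (p : pred A) : lang A := fun z => exists x, z = [:: x] /\ p x.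

Lemma reg_sing (A : finType) (p : pred A) : regular (sing p).
Proof.
pose d := fun (q : option bool) (x : A) => if q is None then Some (p x) else Some false.
have Hs : forall w b, foldl d (Some b) w = if w is [::] then Some b else Some false.
  elim=> [|x w IH] b //=; rewrite IH; by case: w {IH}.
exists (option bool : finType), None, (fun q => q == Some true), d.
case=> [|x w] /=.
  by split=> // -[? []].
rewrite Hs; case: w => [|y w]; split.
- by case=> x' [[->] px]; rewrite px.
- by move=> /eqP [px]; exists x.
- by case=> x' [].
- by [].
Qed.

Lemma reg_nonempty (A : finType) : regular (fun w : seq A => w <> [::]).
Proof.
pose d := fun (q : bool) (x : A) => true.
have Hs : forall w, foldl d true w = true by elim.
exists (bool : finType), false, (fun b => b), d.
by case=> [|x w] /=; [split | rewrite Hs].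
Qed.

Lemma reg_eps (A : finType) : regular (@eps_lang A).
Proof.
pose d := fun (q : bool) (x : A) => false.
have Hs : forall w, foldl d false w = false by elim.
exists (bool : finType), true, (fun b => b), d.
by case=> [|x w] /=; rewrite /eps_lang ?Hs.
Qed.

Lemma reg_empty (A : finType) : regular (fun _ : seq A => False).
Proof.
by exists (bool : finType), true, (fun _ => false), (fun b _ => b).
Qed.

Lemma reg_op (A : finType) o (L1 L2 : lang A) :
  regular L1 -> regular L2 -> regular (apply_op o L1 L2).
Proof.
move=> [Q1 [q1 [F1 [d1 H1]]]] [Q2 [q2 [F2 [d2 H2]]]].
pose d := fun (s : Q1 * Q2) (x : A) => (d1 s.1 x, d2 s.2 x).
have Hs : forall w p q, foldl d (p, q) w = (foldl d1 p w, foldl d2 q w).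
  by elim=> [|x w IH] p q //=; rewrite IH.
exists (Q1 * Q2 : finType)%type, (q1, q2), (fun s : Q1 * Q2 => match o with
  | OpUnion => F1 s.1 || F2 s.2 | OpInter => F1 s.1 && F2 s.2
  | OpDiff => F1 s.1 && ~~ F2 s.2 end), d.
move=> w; rewrite Hs /=; case: o => /=; rewrite H1 H2.
- by split=> [[->|->]|/orP]; rewrite ?orbT.
- by split=> [[-> ->]|/andP].
- split=> [[-> /negP ->] //|/andP [-> /negP]]; by [].
Qed.

Lemma rcons_split (A : eqType) (w u v : seq A) x : rcons w x = u ++ v ->
  (v = [::] /\ u = rcons w x) \/ exists v', v = rcons v' x /\ w = u ++ v'.
Proof.
case/lastP: v => [|v' y]; first by rewrite cats0 => ->; left.
rewrite -rcons_cat => /rcons_inj [-> ->]; right; by exists v'.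
Qed.

Lemma reg_conc (A : finType) (L1 L2 : lang A) : regular L1 -> regular L2 -> regular (conc L1 L2).
Proof.
move=> [Q1 [q1 [F1 [d1 H1]]]] [Q2 [q2 [F2 [d2 H2]]]].
pose add (p : Q1) (X : {set Q2}) := if F1 p then q2 |: X else X.
pose d (s : Q1 * {set Q2}) (x : A) := (d1 s.1 x, add (d1 s.1 x) [set d2 r x | r in s.2]).
pose s0 := (q1, add q1 set0).
have Hfst : forall w, (foldl d s0 w).1 = foldl d1 q1 w.
  by elim/last_ind=> [|w x IH] //; rewrite !foldl_rcons /= IH.
have Hadd : forall p X r, r \in add p X <-> (F1 p /\ r = q2) \/ r \in X.
  move=> p X r; rewrite /add; case: (F1 p); rewrite ?in_setU1.
    by split=> [/orP [/eqP ->|]|[[_ ->]|->]]; [left|right|rewrite eqxx|rewrite orbT].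
  by split=> [|[[]|]]; [right| |].
have Hinv : forall w r, r \in (foldl d s0 w).2 <->
    exists u v, w = u ++ v /\ L1 u /\ r = foldl d2 q2 v.
  elim/last_ind=> [|w x IH] r.
    rewrite /= Hadd in_set0; split.
      case=> [[F ->]|//]; exists [::], [::]; split=> //; split=> //; exact/H1.
    case=> u [v [E [Lu ->]]]; move: E Lu; case: u => // ; case: v => // _ /H1 F.
    by left.
  rewrite foldl_rcons /= Hfst -foldl_rcons Hadd; split.
    case=> [[F ->]|/imsetP [r' /IH [u [v [E [Lu ->]]]] ->]].
      by exists (rcons w x), [::]; rewrite cats0; split=> //; split=> //; exact/H1.
    by exists u, (rcons v x); rewrite E rcons_cat foldl_rcons.
  case=> u [v [/rcons_split [[-> ->]|[v' [-> E]]] [Lu ->]]].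
    by left; split=> //; apply/H1.
  right; rewrite foldl_rcons; apply/imsetP; exists (foldl d2 q2 v') => //.
  by apply/IH; exists u, v'.
exists (Q1 * {set Q2} : finType)%type, s0, (fun s : Q1 * {set Q2} => [exists r in s.2, F2 r]), d.
move=> w; split.
  case=> u [v [E [Lu Lv]]]; apply/existsP; exists (foldl d2 q2 v).
  apply/andP; split; [by apply/Hinv; exists u, v | exact/H2].
case/existsP=> r /andP [/Hinv [u [v [E [Lu ->]]]] F].
by exists u, v; split=> //; split=> //; apply/H2.
Qed.

Lemma reg_subst (D S : finType) (phi : D -> lang S) w : regular_subst phi -> regular (subst phi w).
Proof. move=> H; elim: w => [|d w IH] /=; [exact: reg_eps | exact: reg_conc]. Qed.

Lemma PN_nil (s : seq bool) : all id s -> all negb s -> s = [::].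
Proof. by case: s => [|[] s] //= /andP []. Qed.

Lemma prime2 (A B : lang bool) (x y : seq bool) :
  x <> [::] -> all id x -> y <> [::] -> all negb y ->
  (forall z, conc A B z <-> z = x \/ z = y) ->
  (forall z, A z <-> z = x \/ z = y) \/ (forall z, B z <-> z = x \/ z = y).
Proof.
move=> nx Px ny Ny H.
have [u1 [v1 [Ex [Au1 Bv1]]]] : conc A B x by apply/H; left.
have [u2 [v2 [Ey [Au2 Bv2]]]] : conc A B y by apply/H; right.
have HL : forall u v, A u -> B v -> u ++ v = x \/ u ++ v = y.
  by move=> u v Au Bv; apply/H; exists u, v.
have notNx : ~ all negb x by move=> Nx; exact: nx (PN_nil Px Nx).
have notPy : ~ all id y by move=> Py; exact: ny (PN_nil Py Ny).
have Px' := Px; rewrite Ex all_cat in Px'; case/andP: Px' => Pu1 Pv1.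
case: (eqVneq u1 [::]) => [u1nil | u1n].
  right=> z; split.
    by move=> Bz; apply/H; exists [::], z; split=> //; split=> //; rewrite -u1nil.
  case=> ->; first by rewrite Ex u1nil.
  have Bx : B x by rewrite Ex u1nil.
  case: (HL u2 x Au2 Bx) => E.
    move/(congr1 size): E; rewrite size_cat => /eqP.
    rewrite -{2}[size x]add0n eqn_add2r => /eqP/size0nil u2nil.
    by rewrite Ey u2nil.
  by exfalso; move: Ny; rewrite -E all_cat => /andP [_ ?].
case: (eqVneq v1 [::]) => [v1nil | v1n].
  left=> z; split.
    by move=> Az; apply/H; exists z, [::]; rewrite cats0; split=> //; split=> //; rewrite -v1nil.
  case=> ->; first by rewrite Ex v1nil cats0.
  have Ax : A x by rewrite Ex v1nil cats0.
  case: (HL x v2 Ax Bv2) => E.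
    move/(congr1 size): E; rewrite size_cat => /eqP.
    rewrite -{2}[size x]addn0 eqn_add2l => /eqP/size0nil v2nil.
    by rewrite Ey v2nil cats0.
  by exfalso; move: Ny; rewrite -E all_cat => /andP [? _].
exfalso.
have Pv2 : all id v2.
  case: (HL u1 v2 Au1 Bv2) => E; first by move: Px; rewrite -E all_cat => /andP [].
  by move: Ny; rewrite -E all_cat => /andP [Nu1 _]; move: u1n; rewrite (PN_nil Pu1 Nu1).
have Pu2 : all id u2.
  case: (HL u2 v1 Au2 Bv1) => E; first by move: Px; rewrite -E all_cat => /andP [].
  by move: Ny; rewrite -E all_cat => /andP [_ Nv1]; move: v1n; rewrite (PN_nil Pv1 Nv1).
by apply: notPy; rewrite Ey all_cat Pu2 Pv2.
Qed.

Lemma letter (D : finType) (phi : D -> lang bool) (x y : seq bool) :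
  x <> [::] -> all id x -> y <> [::] -> all negb y ->
  forall w, (forall z, subst phi w z <-> z = x \/ z = y) ->
  exists d, forall z, phi d z <-> z = x \/ z = y.
Proof.
move=> nx Px ny Ny; elim=> [|d w IH] H.
  by have := (H x).2 (or_introl erefl).
have H' : forall z, conc (phi d) (subst phi w) z <-> z = x \/ z = y := H.
case: (prime2 nx Px ny Ny H') => [Hd|Hw]; first by exists d.
exact: IH.
Qed.

Lemma notrat (R : lang bool -> Prop) (y : nat -> seq bool) :
  (forall n, y n <> [::]) -> (forall n, all negb (y n)) ->
  (forall n, R (fun z => z = nseq n.+1 true \/ z = y n)) -> ~ rational_set R.
Proof.
move=> ny Ny HR [D [K [phi [_ [_ [_ [_ Hs]]]]]]].
have Hd : forall n : nat, exists d : D, forall z, phi d z <-> z = nseq n.+1 true \/ z = y n.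
  move=> n; have [w [_ Ew]] := (Hs _).1 (HR n).
  apply: (@letter D phi (nseq n.+1 true) (y n) _ _ (ny n) (Ny n) w) => //.
    by rewrite all_nseq.
  by move=> z; rewrite -Ew.
pose f (i : 'I_(#|D|.+1)) : D := proj1_sig (constructive_indefinite_description _ (Hd i)).
have Hf : forall (i : 'I_(#|D|.+1)) z, phi (f i) z <-> z = nseq i.+1 true \/ z = y i :=
  fun i => proj2_sig (constructive_indefinite_description _ (Hd i)).
have finj : injective f.
  move=> i j E.
  have := (Hf i (nseq i.+1 true)).2 (or_introl erefl).
  rewrite E => /(Hf j) [/(congr1 size)|].
    by rewrite !size_nseq => -[] /val_inj.
  by move=> E'; move: (Ny j); rewrite -E'.
by move: (leq_card f finj); rewrite card_ord ltnn.
Qed.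

Lemma subst_const (D S : finType) (p : pred S) (w : seq D) z :
  subst (fun _ => sing p) w z <-> size z = size w /\ all p z.
Proof.
elim: w z => [|d w IH] z /=.
  by rewrite /eps_lang; split=> [->|[/size0nil ->]].
split.
  by case=> u [v [-> [[x [-> px]] /IH [sv av]]]] /=; rewrite sv px av.
case: z => [|x v] /=; first by case. case=> E /andP [px av].
exists [:: x], v; split=> //; split; first by exists x.
by apply/IH; split=> //; case: E.
Qed.

Lemma subst_b (b : bool) (w : seq unit) z :
  subst (fun _ => sing (pred1 b)) w z <-> z = nseq (size w) b.
Proof.
split.
  by case/subst_const => <- /all_pred1P.
by move=> ->; apply/subst_const; rewrite size_nseq all_pred1_nseq.
Qed.

Definition dc (q : option (option bool)) (x : bool) : option (option bool) :=
  match q with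
  | None => Some (Some x)
  | Some (Some c) => if x == c then Some (Some c) else Some None
  | Some None => Some None
  end.

Definition gc (z : seq bool) : option (option bool) :=
  if z is c :: z' then Some (if all (pred1 c) z' then Some c else None) else None.

Lemma foldl_dc z : foldl dc None z = gc z.
Proof.
elim/last_ind: z => [|z x IH] //; rewrite foldl_rcons IH.
case: z {IH} => [|c z] //=; rewrite all_rcons.
by case: (all (pred1 c) z); rewrite /= ?andbF //; case: (x == c).
Qed.

Definition Cst : lang bool := fun z => foldl dc None z != Some None.
Definition NCst : lang bool := fun z => foldl dc None z == Some None.

Lemma reg_Cst : regular Cst.
Proof. by exists (option (option bool) : finType), None, (fun q => q != Some None), dc. Qed.
Lemma reg_NCst : regular NCst.
Proof. by exists (option (option bool) : finType), None, (fun q => q == Some None), dc. Qed.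

Lemma cst_iff n z : size z = n.+1 /\ gc z != Some None <-> z = nseq n.+1 true \/ z = nseq n.+1 false.
Proof.
split.
  case: z => [|c z] /=; first by case.
  case=> -[sz]; case: ifP => // /all_pred1P Ez _.
  by rewrite Ez sz; move: Ez => _; case: c; [left|right].
by case=> ->; rewrite size_nseq /= all_pred1_nseq.
Qed.

Definition uK : lang unit := fun w => w <> [::].

Lemma rat_u (phi : unit -> lang bool) (K : lang unit) :
  regular K -> nonempty_words K -> (forall d, regular (phi d)) -> rational_set (rset K phi).
Proof.
move=> rK nK rphi; exists (unit : finType), K, phi; split; first by rewrite card_unit.
by do 3!(split=> //).
Qed.

Lemma part1 o : exists (S : finType) (R1 R2 : lang S -> Prop),
      0 < #|S| /\ rational_set R1 /\ rational_set R2 /\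
      ~ rational_set (cart o R1 R2).
Proof.
exists (bool : finType).
have nuK : nonempty_words uK by [].
have n1 : nonempty_words (sing (fun _ : unit => true)) by move=> w [x [-> _]].
case: o.
- exists (rset uK (fun _ => sing (pred1 true))), (rset (sing (fun _ : unit => true)) (fun _ => sing (pred1 false))).
  split; first by rewrite card_bool.
  split; first by apply: rat_u => //; [exact: reg_nonempty | move=> _; exact: reg_sing].
  split; first by apply: rat_u => //; [exact: reg_sing | move=> _; exact: reg_sing].
  apply: (@notrat _ (fun _ => [:: false])) => // n.
  exists (subst (fun _ => sing (pred1 true)) (nseq n.+1 tt)), (subst (fun _ => sing (pred1 false)) [:: tt]).
  split; first by exists (nseq n.+1 tt).
  split; first by exists [:: tt]; split=> //; exists tt.
  apply: lang_ext => z; rewrite /apply_op; cbv beta iota.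
  split=> [[->|->]|[H|H]].
  + by left; apply: (proj2 (subst_b _ _ _)); rewrite size_nseq.
  + by right; apply: (proj2 (subst_b _ _ _)).
  + by left; move: (proj1 (subst_b _ _ _) H); rewrite size_nseq.
  + by right; move: (proj1 (subst_b _ _ _) H).
- exists (rset uK (fun _ => sing (fun _ : bool => true))), (rset (sing (fun _ : unit => true)) (fun _ => Cst)).
  split; first by rewrite card_bool.
  split; first by apply: rat_u => //; [exact: reg_nonempty | move=> _; exact: reg_sing].
  split; first by apply: rat_u => //; [exact: reg_sing | move=> _; exact: reg_Cst].
  apply: (@notrat _ (fun n => nseq n.+1 false)) => [n|n|n]; [by []|by rewrite all_nseq|].
  exists (subst (fun _ => sing (fun _ : bool => true)) (nseq n.+1 tt)), (subst (fun _ => Cst) [:: tt]).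
  split; first by exists (nseq n.+1 tt).
  split; first by exists [:: tt]; split=> //; exists tt.
  apply: lang_ext => z; rewrite /apply_op subst1; cbv beta iota.
  split.
    move/(proj2 (cst_iff _ _))=> [sz Cz]; split; first by apply: (proj2 (subst_const _ _ _)); rewrite size_nseq sz; split=> //; apply/allP.
    by rewrite /Cst foldl_dc.
  move=> [/(proj1 (subst_const _ _ _)) [sz _] Cz]; apply: (proj1 (cst_iff _ _)); rewrite size_nseq in sz; split=> //.
  by rewrite -foldl_dc.
- exists (rset uK (fun _ => sing (fun _ : bool => true))), (rset (sing (fun _ : unit => true)) (fun _ => NCst)).
  split; first by rewrite card_bool.
  split; first by apply: rat_u => //; [exact: reg_nonempty | move=> _; exact: reg_sing].
  split; first by apply: rat_u => //; [exact: reg_sing | move=> _; exact: reg_NCst].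
  apply: (@notrat _ (fun n => nseq n.+1 false)) => [n|n|n]; [by []|by rewrite all_nseq|].
  exists (subst (fun _ => sing (fun _ : bool => true)) (nseq n.+1 tt)), (subst (fun _ => NCst) [:: tt]).
  split; first by exists (nseq n.+1 tt).
  split; first by exists [:: tt]; split=> //; exists tt.
  apply: lang_ext => z; rewrite /apply_op subst1; cbv beta iota.
  split.
    move/(proj2 (cst_iff _ _))=> [sz Cz]; split; first by apply: (proj2 (subst_const _ _ _)); rewrite size_nseq sz; split=> //; apply/allP.
    by rewrite /NCst foldl_dc; apply/negP.
  move=> [/(proj1 (subst_const _ _ _)) [sz _] Cz]; apply: (proj1 (cst_iff _ _)); rewrite size_nseq in sz; split=> //.
  by rewrite -foldl_dc; apply/negP.
Qed.

Lemma rat_reg (S : finType) (R : lang S -> Prop) L : rational_set R -> R L -> regular L.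
Proof.
move=> [D [K [phi [_ [_ [_ [Hphi Hs]]]]]]] /Hs [w [_ ->]]; exact: reg_subst.
Qed.

Lemma In_nth (T : Type) (L0 : T) (s : seq T) L :
  List.In L s <-> exists i, i < size s /\ nth L0 s i = L.
Proof.
elim: s => [|a s IH] /=; first by split=> // -[i []].
split.
  case=> [<-|H]; first by exists 0.
  by have [i [Hi Ei]] := IH.1 H; exists i.+1.
case=> -[|i] [Hi E]; first by left.
by right; apply: IH.2; exists i.
Qed.

Lemma part2 o (S : finType) (R1 R2 : lang S -> Prop) :
      0 < #|S| -> rational_set R1 -> rational_set R2 ->
      finite_set R1 -> finite_set R2 -> rational_set (cart o R1 R2).
Proof.
move=> _ HR1 HR2 [s1 H1] [s2 H2].
pose s := List.flat_map (fun L1 => List.map (fun L2 => apply_op o L1 L2) s2) s1.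
have Hcart : forall L, cart o R1 R2 L <-> List.In L s.
  move=> L; split.
    case=> [L1 [L2 [r1 [r2 ->]]]]; apply/List.in_flat_map; exists L1; split; first exact/H1.
    by apply/List.in_map_iff; exists L2; split=> //; apply/H2.
  case/List.in_flat_map=> L1 [i1 /List.in_map_iff [L2 [<- i2]]].
  by exists L1, L2; split; [exact/H1 | split; [exact/H2 | by []]].
have Hreg : forall L, List.In L s -> regular L.
  move=> L /Hcart [L1 [L2 [r1 [r2 ->]]]].
  by apply: reg_op; [exact: rat_reg r1 | exact: rat_reg r2].
pose L0 : lang S := fun _ => False.
exists ('I_(size s).+1 : finType), (sing (fun i : 'I_(size s).+1 => i < size s)), (fun i : 'I_(size s).+1 => nth L0 s i).
split; first by rewrite card_ord.
split; first exact: reg_sing.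
split; first by move=> w [x [-> _]].
split.
  move=> i; case: (ltnP i (size s)) => Hi.
    by apply: Hreg; apply/(In_nth L0); exists i.
  rewrite nth_default //; exact: reg_empty.
move=> L; split.
  move/Hcart/(In_nth L0) => [i [Hi <-]].
  exists [:: Ordinal (ltnW Hi : i < (size s).+1)]; split; first by exists (Ordinal (ltnW Hi : i < (size s).+1)).
  by rewrite subst1.
case=> w [[i [-> Hi]] ->]; apply/Hcart/(In_nth L0).
by exists i; split=> //; rewrite subst1.
Qed.

Definition phiI : bool -> lang bool := fun d => sing (pred1 d).

Lemma subst_id w z : subst phiI w z <-> z = w.
Proof.
elim: w z => [|d w IH] z //=.
split.
  by case=> u [v [-> [[x [-> /eqP ->]] /IH ->]]].
move=> ->; exists [:: d], w; split; first by [].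
split; last exact: (proj2 (IH w) erefl).
by exists d; split=> //=; exact: eqxx.
Qed.

Lemma part3_gen o (b : bool) :
  (forall w, ~ (forall z, apply_op o (subst phiI [:: true]) (subst phiI [:: b]) z <-> z = w)) ->
  (exists (S D : finType) (phi : D -> lang S) (K1 K2 : lang D),
      0 < #|S| /\ 0 < #|D| /\ regular_subst phi /\
      regular K1 /\ nonempty_words K1 /\ regular K2 /\ nonempty_words K2 /\
      finite_set (rset K1 phi) /\ finite_set (rset K2 phi) /\
      ~ (exists K' : lang D, regular K' /\ nonempty_words K' /\
           same_set (cart o (rset K1 phi) (rset K2 phi)) (rset K' phi))).
Proof.
move=> Hbad.
have fin : forall c, finite_set (rset (sing (pred1 c)) phiI).
  move=> c; exists [:: subst phiI [:: c]] => L; split.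
    by case=> w [[x [-> /eqP ->]] ->]; left.
  by case=> [<-|[]]; exists [:: c]; split=> //; exists c; split=> //=; exact: eqxx.
have ne : forall c : bool, nonempty_words (sing (pred1 c)) by move=> c w [x [-> _]].
exists (bool : finType), (bool : finType), phiI, (sing (pred1 true)), (sing (pred1 b)).
do 2!(split; first by rewrite card_bool).
split; first by move=> d; exact: reg_sing.
do 2!(split; first exact: reg_sing; split; first exact: ne).
do 2!(split; first exact: fin).
move=> [K' [_ [_ Hs]]].
have : cart o (rset (sing (pred1 true)) phiI) (rset (sing (pred1 b)) phiI)
          (apply_op o (subst phiI [:: true]) (subst phiI [:: b])).
  exists (subst phiI [:: true]), (subst phiI [:: b]); split.
    by exists [:: true]; split=> //; exists true; split=> //=; exact: eqxx.
  by split=> //; exists [:: b]; split=> //; exists b; split=> //=; exact: eqxx.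
move/Hs=> [w [_ E]]; apply: (Hbad w) => z; rewrite E; exact: subst_id.
Qed.

Lemma part3 o : (exists (S D : finType) (phi : D -> lang S) (K1 K2 : lang D),
      0 < #|S| /\ 0 < #|D| /\ regular_subst phi /\
      regular K1 /\ nonempty_words K1 /\ regular K2 /\ nonempty_words K2 /\
      finite_set (rset K1 phi) /\ finite_set (rset K2 phi) /\
      ~ (exists K' : lang D, regular K' /\ nonempty_words K' /\
           same_set (cart o (rset K1 phi) (rset K2 phi)) (rset K' phi))).
Proof.
case: o.
- apply: (@part3_gen _ false) => w H.
  have e1 := (H [:: true]).1 (or_introl (proj2 (subst_id _ _) erefl)).
  have e2 := (H [:: false]).1 (or_intror (proj2 (subst_id _ _) erefl)).
  by rewrite -e1 in e2.
- apply: (@part3_gen _ false) => w H.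
  have [/(proj1 (subst_id _ _)) e1 /(proj1 (subst_id _ _)) e2] := (H w).2 erefl.
  by rewrite e1 in e2.
- apply: (@part3_gen _ true) => w H.
  by have [] := (H w).2 erefl.
Qed.

Theorem corollary2 (o : lang_op) :
  (* (1) *)
  (exists (S : finType) (R1 R2 : lang S -> Prop),
      0 < #|S| /\ rational_set R1 /\ rational_set R2 /\
      ~ rational_set (cart o R1 R2)) /\
  (* (2) *)
  (forall (S : finType) (R1 R2 : lang S -> Prop),
      0 < #|S| -> rational_set R1 -> rational_set R2 ->
      finite_set R1 -> finite_set R2 -> rational_set (cart o R1 R2)) /\
  (* (3) *)
  (exists (S D : finType) (phi : D -> lang S) (K1 K2 : lang D),
      0 < #|S| /\ 0 < #|D| /\ regular_subst phi /\
      regular K1 /\ nonempty_words K1 /\ regular K2 /\ nonempty_words K2 /\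
      finite_set (rset K1 phi) /\ finite_set (rset K2 phi) /\
      ~ (exists K' : lang D, regular K' /\ nonempty_words K' /\
           same_set (cart o (rset K1 phi) (rset K2 phi)) (rset K' phi))).
Proof.
split; first exact: part1.
split; first by move=> S R1 R2; exact: part2.
exact: part3.
Qed.
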